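(* In $NOM$, writing $\phi\vee\psi$ for $\neg(\neg\phi\wedge\neg\psi)$ and $\phi\perp\!\!\!\perp\psi$ for $(\phi\rightarrow(\psi\rightarrow\phi))\wedge(\psi\rightarrow(\phi\rightarrow\psi))$, the following rule is derivable for every finite sequence $\Gamma$ and formulas $\phi,\psi$: from $\Gamma\vdash((\phi\wedge\psi)\vee(\phi\wedge\neg\psi))\vee((\neg\phi\wedge\psi)\vee(\neg\phi\wedge\neg\psi))$ infer $\Gamma\vdash\phi\perp\!\!\!\perp\psi$.
   Context: The propositional deductive system $NOM$: formulas are built from propositional letters using $\wedge$, $\rightarrow$, $\neg$. Sequents are $\phi_1,\ldots,\phi_n\vdash\psi$ ($n\ge0$) with antecedent a finite ordered sequence. With $\Gamma$ a finite possibly empty sequence of formulas and $\phi,\psi,\chi$ formulas, the rules of $NOM$ are: (assumption) $\Gamma,\phi\vdash\phi$; (cut) $\Gamma\vdash\phi$, $\Gamma,\phi\vdash\psi$ $\Rightarrow$ $\Gamma\vdash\psi$; (paste) $\Gamma\vdash\phi$, $\Gamma\vdash\psi$ $\Rightarrow$ $\Gamma,\phi\vdash\psi$; (compatible exchange) $\Gamma,\phi,\psi\vdash\phi$, $\Gamma,\phi,\psi\vdash\chi$, $\Gamma,\psi,\phi\vdash\psi$ $\Rightarrow$ $\Gamma,\psi,\phi\vdash\chi$; ($\wedge$-intro) $\Gamma\vdash\phi$, $\Gamma\vdash\psi$ $\Rightarrow$ $\Gamma\vdash\phi\wedge\psi$; ($\wedge$-elim) $\Gamma\vdash\phi\wedge\psi$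 $\Rightarrow$ $\Gamma\vdash\phi$ and $\Rightarrow$ $\Gamma\vdash\psi$; ($\rightarrow$-intro) $\Gamma,\phi\vdash\psi$ $\Rightarrow$ $\Gamma\vdash\phi\rightarrow\psi$; ($\rightarrow$-elim) $\Gamma\vdash\phi\rightarrow\psi$ $\Rightarrow$ $\Gamma,\phi\vdash\psi$; (excluded middle) $\Gamma,\phi\vdash\psi$, $\Gamma,\neg\phi\vdash\psi$ $\Rightarrow$ $\Gamma\vdash\psi$; (explosion) $\Gamma\vdash\neg\phi$ $\Rightarrow$ $\Gamma,\phi\vdash\psi$. A rule schema is derivable if in every instance its conclusion can be derived from its premises using these rules. *)

(* Defs.v *)
From Stdlib Require Import List.
Import ListNotations.

Inductive form : Type :=
| Var : nat -> form
| And : form -> form -> form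
| Imp : form -> form -> form
| Neg : form -> form.

(* A sequent phi_1,...,phi_n |- psi: antecedent is an ordered list;
   "Gamma, phi" is Gamma ++ [phi]. *)
Record sequent : Type := Seq { ante : list form; succ : form }.

Inductive derives (H : sequent -> Prop) : sequent -> Prop :=
| d_prem : forall s, H s -> derives H s
| d_assum : forall G p, derives H (Seq (G ++ [p]) p)
| d_cut : forall G p q,
    derives H (Seq G p) -> derives H (Seq (G ++ [p]) q) -> derives H (Seq G q)
| d_paste : forall G p q,
    derives H (Seq G p) -> derives H (Seq G q) -> derives H (Seq (G ++ [p]) q)
| d_cexch : forall G p q r,
    derives H (Seq (G ++ [p; q]) p) ->
    derives H (Seq (G ++ [p; q]) r) ->
    derives H (Seq (G ++ [q; p]) q) ->
    derives H (Seq (G ++ [q; p]) r)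
| d_andI : forall G p q,
    derives H (Seq G p) -> derives H (Seq G q) -> derives H (Seq G (And p q))
| d_andE1 : forall G p q, derives H (Seq G (And p q)) -> derives H (Seq G p)
| d_andE2 : forall G p q, derives H (Seq G (And p q)) -> derives H (Seq G q)
| d_impI : forall G p q, derives H (Seq (G ++ [p]) q) -> derives H (Seq G (Imp p q))
| d_impE : forall G p q, derives H (Seq G (Imp p q)) -> derives H (Seq (G ++ [p]) q)
| d_em : forall G p q,
    derives H (Seq (G ++ [p]) q) -> derives H (Seq (G ++ [Neg p]) q) -> derives H (Seq G q)
| d_expl : forall G p q, derives H (Seq G (Neg p)) -> derives H (Seq (G ++ [p]) q).

Definition Or (p q : form) : form := Neg (And (Neg p) (Neg q)).
Definition Indep (p q : form) : form :=
  And (Imp p (Imp q p)) (Imp q (Imp p q)).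

(* Main.v *)
Require Import Defs.
From Stdlib Require Import List.
Import ListNotations.

Definition absurdc (H : sequent -> Prop) (G : list form) :=
  forall r, derives H (Seq G r).

Lemma app1 (G : list form) a b : G ++ [a; b] = (G ++ [a]) ++ [b].
Proof. rewrite <- app_assoc. reflexivity. Qed.

Lemma expl' H G p : derives H (Seq G (Neg p)) -> absurdc H (G ++ [p]).
Proof. intros h r. apply d_expl. exact h. Qed.

Lemma abs_ext H G x : absurdc H G -> absurdc H (G ++ [x]).
Proof. intros h. apply expl'. apply h. Qed.

Lemma abs_neg H G a : absurdc H (G ++ [a]) -> derives H (Seq G (Neg a)).
Proof. intros h. apply d_em with (p:=a); [apply h | apply d_assum]. Qed.

Lemma ABS H G a b : absurdc H (G ++ [a]) -> derives H (Seq (G ++ [b]) a) ->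
  absurdc H (G ++ [b]).
Proof.
  intros ha hb r. apply d_cut with (p:=a); [exact hb|].
  rewrite <- app_assoc; simpl.
  apply d_cexch with (p:=a).
  - rewrite app1. apply abs_ext. exact ha.
  - rewrite app1. apply abs_ext. exact ha.
  - rewrite app1. apply d_paste; [exact hb | apply d_assum].
Qed.

Lemma ABS' H G a b : absurdc H (G ++ [a; b]) -> derives H (Seq (G ++ [b; a]) b) ->
  absurdc H (G ++ [b; a]).
Proof. intros ha hb r. apply d_cexch with (p:=a); auto. Qed.

Lemma DN H G p : derives H (Seq G p) -> absurdc H (G ++ [Neg p]).
Proof.
  intro hp. apply expl'.
  apply d_cut with (p:=p); [exact hp|]. apply d_impE.
  apply d_em with (p:=(Neg p)).
  - apply d_impI. apply d_expl. apply d_assum.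
  - apply d_impI. apply d_paste; [| apply d_assum].
    apply d_em with (p:=p).
    + apply d_assum.
    + apply d_expl. apply d_assum.
Qed.

Definition orth H a b := forall S, derives H (Seq (S ++ [a]) (Neg b)).

Lemma orth_intro H a b x :
  (forall S, derives H (Seq (S ++ [a]) x)) ->
  (forall S, derives H (Seq (S ++ [b]) (Neg x))) -> orth H a b.
Proof.
  intros ha hb S. apply abs_neg. apply ABS with (a:=Neg x).
  - apply DN. apply ha.
  - apply hb.
Qed.

Lemma OrE H D a b : orth H a b -> derives H (Seq D (Or a b)) ->
  absurdc H ((D ++ [Neg a]) ++ [Neg b]).
Proof.
  intros ho hd.
  set (e := And (Neg a) (Neg b)).
  assert (h1 : absurdc H (D ++ [e])) by (apply expl'; exact hd).
  assert (h2 : absurdc H ((D ++ [Neg a]) ++ [e])).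
  { rewrite <- app_assoc; simpl. apply ABS' with (a := e).
    - rewrite app1. apply abs_ext. exact h1.
    - rewrite app1. apply d_andE1 with (q:=(Neg b)). apply d_assum. }
  set (D' := D ++ [Neg a]).
  assert (h3 : derives H (Seq (D' ++ [Neg b]) (Neg a))).
  { apply d_em with (p:=a).
    - intros. rewrite <- app_assoc; simpl.
      apply (ABS' H D' a (Neg b)).
      + rewrite app1. apply abs_ext. apply expl'. apply d_assum.
      + rewrite app1. apply ho.
    - apply d_assum. }
  assert (h4 : derives H (Seq (D' ++ [Neg b]) e)).
  { apply d_andI; [exact h3 | apply d_assum]. }
  exact (ABS H D' e (Neg b) h2 h4).
Qed.

Lemma OrElim H D a b X : orth H a b -> derives H (Seq D (Or a b)) ->
  derives H (Seq (D ++ [a]) X) -> derives H (Seq ((D ++ [Neg a]) ++ [b]) X) ->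
  derives H (Seq D X).
Proof.
  intros ho hd h1 h2.
  apply d_em with (p:=a); [exact h1|].
  apply d_em with (p:=b); [exact h2|].
  apply (OrE H D a b ho hd).
Qed.


Lemma cell_pp H S p q : derives H (Seq S p) -> derives H (Seq S q) ->
  derives H (Seq S (Indep p q)).
Proof.
  intros hp hq. apply d_andI.
  - apply d_impI. apply d_impI. apply d_paste.
    + apply d_paste; assumption.
    + apply d_assum.
  - apply d_impI. apply d_impI. apply d_paste.
    + apply d_paste; assumption.
    + apply d_assum.
Qed.

Lemma cell_pn H S p q : derives H (Seq S p) -> derives H (Seq S (Neg q)) ->
  derives H (Seq S (Indep p q)).
Proof.
  intros hp hq. apply d_andI.
  - apply d_impI. apply d_impI. apply d_expl. apply d_paste; assumption.
  - apply d_impI. apply d_expl. assumption.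
Qed.

Lemma cell_np H S p q : derives H (Seq S (Neg p)) -> derives H (Seq S q) ->
  derives H (Seq S (Indep p q)).
Proof.
  intros hp hq. apply d_andI.
  - apply d_impI. apply d_expl. assumption.
  - apply d_impI. apply d_impI. apply d_expl. apply d_paste; assumption.
Qed.

Lemma cell_nn H S p q : derives H (Seq S (Neg p)) -> derives H (Seq S (Neg q)) ->
  derives H (Seq S (Indep p q)).
Proof.
  intros hp hq. apply d_andI.
  - apply d_impI. apply d_expl. assumption.
  - apply d_impI. apply d_expl. assumption.
Qed.

Lemma andl H S a b : derives H (Seq (S ++ [And a b]) a).
Proof. apply d_andE1 with (q:=b). apply d_assum. Qed.
Lemma andr H S a b : derives H (Seq (S ++ [And a b]) b).
Proof. apply d_andE2 with (p:=a). apply d_assum. Qed.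

Theorem proposition4p14 :
  forall (G : list form) (p q : form),
    derives
      (fun s => s = Seq G (Or (Or (And p q) (And p (Neg q)))
                              (Or (And (Neg p) q) (And (Neg p) (Neg q)))))
      (Seq G (Indep p q)).
Proof.
  intros G p q.
  set (H := fun s => s = Seq G (Or (Or (And p q) (And p (Neg q)))
                              (Or (And (Neg p) q) (And (Neg p) (Neg q))))).
  assert (o12 : orth H (And p q) (And p (Neg q))).
  { apply orth_intro with (x:=q); intros; [apply andr | apply andr]. }
  assert (o34 : orth H (And (Neg p) q) (And (Neg p) (Neg q))).
  { apply orth_intro with (x:=q); intros; [apply andr | apply andr]. }
  assert (oAB : orth H (Or (And p q) (And p (Neg q)))
                       (Or (And (Neg p) q) (And (Neg p) (Neg q)))).
  { apply orth_intro with (x:=p); intros S.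
    - apply OrElim with (a:=(And p q)) (b:=(And p (Neg q))); [exact o12 | apply d_assum | apply andl | apply andl].
    - apply OrElim with (a:=And (Neg p) q) (b:=And (Neg p) (Neg q)); [exact o34 | apply d_assum | apply andl | apply andl]. }
  apply OrElim with (a:=Or (And p q) (And p (Neg q)))
                    (b:=Or (And (Neg p) q) (And (Neg p) (Neg q))).
  - exact oAB.
  - apply d_prem. reflexivity.
  - apply OrElim with (a:=(And p q)) (b:=(And p (Neg q))); [exact o12 | apply d_assum | |].
    + apply cell_pp; [apply andl | apply andr].
    + apply cell_pn; [apply andl | apply andr].
  - apply OrElim with (a:=And (Neg p) q) (b:=And (Neg p) (Neg q)); [exact o34 | apply d_assum | |].
    + apply cell_np; [apply andl | apply andr].
    + apply cell_nn; [apply andl | apply andr].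
Qed.
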